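(* Let $f:[0,\infty)\to[0,1]$ be a $C^1$, non-decreasing function with $f(0)=0$ and $f'(0)\ge\lambda$ for some fixed $\lambda>0$. Then for every $\epsilon>0$ there exists a piecewise linear function $\widetilde f$ consisting of only finitely many line segments such that $\frac{|f(t)-\widetilde f(t)|}{f(t)}\le\epsilon$ for all $t>0$. *)

(* Defs.v *)
From Stdlib Require Import Reals.
From Coquelicot Require Import Coquelicot.
Open Scope R_scope.

(* f : R -> R is C^1 on [0, +oo): there is a derivative function df such that
   f has derivative df t at every t > 0, right derivative df 0 at 0,
   df is continuous at every t > 0 and right-continuous at 0.
   (Values of f at negative arguments are irrelevant.) *)
Definition C1_on_nonneg (f df : R -> R) : Prop :=
  (forall t, 0 < t -> is_derive f t (df t)) /\
  filterlim (fun h => (f h - f 0) / h) (at_right 0) (locally (df 0)) /\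
  (forall t, 0 < t -> continuous df t) /\
  filterlim df (at_right 0) (locally (df 0)).

(* g is a (continuous) piecewise linear function on [0, +oo) made of finitely
   many pieces: breakpoints 0 = t_0 < t_1 < ... < t_n, g affine (a_i x + b_i)
   on each [t_i, t_{i+1}] and affine (a_n x + b_n) on [t_n, +oo). Closed
   intervals overlap at breakpoints, so g is continuous there. *)
Definition piecewise_linear_fin (g : R -> R) : Prop :=
  exists (n : nat) (t a b : nat -> R),
    t 0%nat = 0 /\
    (forall i, (i < n)%nat -> t i < t (S i)) /\
    (forall i x, (i < n)%nat -> t i <= x <= t (S i) -> g x = a i * x + b i) /\
    (forall x, t n <= x -> g x = a n * x + b n).

(* Main.v *)
Require Import Defs.
From Stdlib Require Import Reals Lra Lia Classical.
From Coquelicot Require Import Coquelicot.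
Open Scope R_scope.

Definition PLlast (g : R -> R) (c : R) : Prop :=
  exists (n : nat) (t a b : nat -> R),
    t 0%nat = 0 /\
    (forall i, (i < n)%nat -> t i < t (S i)) /\
    (forall i x, (i < n)%nat -> t i <= x <= t (S i) -> g x = a i * x + b i) /\
    (forall x, t n <= x -> g x = a n * x + b n) /\ t n = c.

Lemma PLlast_pl g c : PLlast g c -> piecewise_linear_fin g.
Proof.
  intros [n [t [a [b [H1 [H2 [H3 [H4 _]]]]]]]].
  exists n, t, a, b. tauto.
Qed.

Lemma chain (t : nat -> R) n : (forall i, (i < n)%nat -> t i < t (S i)) ->
  forall k i, (i + k <= n)%nat -> t i <= t (i + k)%nat.
Proof.
  intros H k. induction k as [|k IH]; intros i Hi.
  - rewrite Nat.add_0_r. lra.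
  - replace (i + S k)%nat with (S (i + k)) by lia.
    assert (t i <= t (i+k)%nat) by (apply IH; lia).
    assert (t (i+k)%nat < t (S (i+k))) by (apply H; lia). lra.
Qed.

Lemma chain_n (t : nat -> R) n : (forall i, (i < n)%nat -> t i < t (S i)) ->
  forall i, (i <= n)%nat -> t i <= t n.
Proof.
  intros H i Hi. assert (A := chain t n H (n - i) i ltac:(lia)).
  replace (i + (n - i))%nat with n in A by lia. exact A.
Qed.

Lemma L1 g c s : PLlast g c ->
  PLlast (fun x => if Rle_dec x c then g x else g c + s * (x - c)) c.
Proof.
  intros [n [t [a [b [H1 [H2 [H3 [H4 H5]]]]]]]].
  exists n, t, (fun i => if Nat.ltb i n then a i else s),
    (fun i => if Nat.ltb i n then b i else g c - s * c).
  repeat split; auto.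
  - intros i x Hi Hx. assert (Nat.ltb i n = true) as E by (apply Nat.ltb_lt; auto).
    rewrite E. assert (t (S i) <= t n) by (apply chain_n; auto).
    destruct (Rle_dec x c); [apply H3; auto | lra].
  - intros x Hx. rewrite Nat.ltb_irrefl.
    destruct (Rle_dec x c).
    + assert (x = c) by lra. subst x. ring.
    + ring.
Qed.

Lemma L2 g c c' s : PLlast g c -> c < c' ->
  PLlast (fun x => if Rle_dec x c' then g x else g c' + s * (x - c')) c'.
Proof.
  intros [n [t [a [b [H1 [H2 [H3 [H4 H5]]]]]]]] Hc.
  exists (S n), (fun i => if Nat.leb i n then t i else c'),
    (fun i => if Nat.leb i n then a i else s),
    (fun i => if Nat.leb i n then b i else g c' - s * c').
  repeat split.
  - simpl. auto.
  - intros i Hi. assert (Nat.leb i n = true) as E by (apply Nat.leb_le; lia).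
    rewrite E. destruct (Nat.leb (S i) n) eqn:E2.
    + apply H2. apply Nat.leb_le in E2. lia.
    + apply Nat.leb_gt in E2. assert (i = n) by lia. subst. lra.
  - intros i x Hi Hx. assert (Nat.leb i n = true) as E by (apply Nat.leb_le; lia).
    rewrite E in *. destruct (Nat.leb (S i) n) eqn:E2.
    + apply Nat.leb_le in E2. assert (t (S i) <= t n) by (apply chain_n; auto).
      destruct (Rle_dec x c'); [apply H3; auto; lia | lra].
    + apply Nat.leb_gt in E2. assert (i = n) by lia. subst.
      destruct (Rle_dec x c'); [apply H4; lra | lra].
  - intros x Hx. assert (Nat.leb (S n) n = false) as E by (apply Nat.leb_gt; lia).
    rewrite E in *. destruct (Rle_dec x c').
    + assert (x = c') by lra. subst x. ring.
    + ring.
  - assert (Nat.leb (S n) n = false) as E by (apply Nat.leb_gt; lia). rewrite E. auto.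
Qed.

Lemma div_helper x y e : 0 < y -> x <= e * y -> x / y <= e.
Proof. intros. apply Rle_div_l; lra. Qed.

Theorem theorem3 (f df : R -> R) (lambda : R)
  (Hlambda : 0 < lambda)
  (HC1 : C1_on_nonneg f df)
  (Hrange : forall t, 0 <= t -> 0 <= f t <= 1)
  (Hmono : forall s t, 0 <= s -> s <= t -> f s <= f t)
  (H0 : f 0 = 0)
  (Hd0 : lambda <= df 0) :
  forall eps : R, 0 < eps ->
    exists g : R -> R, piecewise_linear_fin g /\
      forall t, 0 < t -> Rabs (f t - g t) / f t <= eps.
Proof.
  intros eps Heps.
  destruct HC1 as [Hder [Hlim _]].
  set (d0 := df 0) in *.
  set (e1 := Rmin (d0/2) (eps * d0 / 4)).
  assert (He1 : 0 < e1) by (unfold e1; apply Rmin_pos; nra).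
  assert (He1a : e1 <= d0/2) by apply Rmin_l.
  assert (He1b : e1 <= eps * d0 / 4) by apply Rmin_r.
  destruct (proj1 (filterlim_locally _ _) Hlim (mkposreal e1 He1)) as [d Hd].
  set (dl := d / 2).
  assert (Hdl : 0 < dl) by (unfold dl; destruct d; simpl; lra).
  assert (Hr : forall t, 0 < t <= dl -> Rabs (f t / t - d0) < e1).
  { intros t Ht. assert (B := Hd t). simpl in B.
    assert (X : ball 0 d t).
    { change (Rabs (t - 0) < d). rewrite Rminus_0_r, Rabs_pos_eq by lra.
      unfold dl in Ht. destruct d; simpl in *; lra. }
    specialize (B X (proj1 Ht)). change (Rabs ((f t - f 0)/t - d0) < e1) in B.
    rewrite H0, Rminus_0_r in B. exact B. }
  set (rd := f dl / dl).
  assert (Hrd := Hr dl (conj Hdl (Rle_refl _))). fold rd in Hrd.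
  apply Rabs_def2 in Hrd. destruct Hrd as [Hrd1 Hrd2].
  set (m := f dl).
  assert (Hm : 0 < m).
  { unfold m. assert (f dl = rd * dl) by (unfold rd; field; lra). rewrite H. apply Rmult_lt_0_compat; lra. }
  set (g1 := fun x => if Rle_dec x dl then rd * x else rd * dl + 0 * (x - dl)).
  assert (PL1 : PLlast g1 dl).
  { assert (P0 : PLlast (fun x => rd * x) 0).
    { exists 0%nat, (fun _ => 0), (fun _ => rd), (fun _ => 0).
      repeat split; intros; try lia; ring. }
    exact (L2 _ 0 dl 0 P0 Hdl). }
  set (Good := fun c g => PLlast g c /\ g c = f c /\
     forall t, 0 < t <= c -> Rabs (f t - g t) / f t <= eps).
  assert (G1 : Good dl g1).
  { split; [exact PL1|split].
    - unfold g1. destruct (Rle_dec dl dl); [|lra]. unfold rd. field. lra.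
    - intros t Ht. unfold g1. destruct (Rle_dec t dl); [|lra].
      assert (Hrt := Hr t Ht). apply Rabs_def2 in Hrt. destruct Hrt as [Hrt1 Hrt2].
      set (rt := f t / t) in *.
      assert (Ef : f t = t * rt) by (unfold rt; field; lra).
      apply div_helper. nra. rewrite Ef.
      replace (t * rt - rd * t) with (t * (rt - rd)) by ring.
      assert (A1 : eps * d0 / 2 <= eps * rt) by nra.
      assert (A2 : Rabs (rt - rd) <= eps * rt).
      { apply Rabs_le. split; lra. }
      rewrite Rabs_mult, Rabs_pos_eq by lra.
      replace (eps * (t * rt)) with (t * (eps * rt)) by ring.
      apply Rmult_le_compat_l; lra. }
  set (E := fun y => exists t, 0 <= t /\ y = f t).
  assert (HB : bound E).
  { exists 1. intros y [t [Ht ->]]. apply Hrange; auto. }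
  assert (HE : exists x, E x) by (exists (f 0); exists 0; split; lra).
  destruct (completeness E HB HE) as [L [HLu HLl]].
  assert (Ht0 : exists t0, 0 <= t0 /\ L - eps * m < f t0).
  { destruct (classic (exists t0, 0 <= t0 /\ L - eps * m < f t0)) as [H|H]; auto.
    exfalso. assert (L <= L - eps * m).
    { apply HLl. intros y [t [Ht ->]]. apply Rnot_lt_le. intro C. apply H.
      exists t. auto. }
    nra. }
  destruct Ht0 as [t0 [Ht0 Ht0L]].
  set (T := Rmax t0 dl).
  assert (HT1 : t0 <= T) by apply Rmax_l.
  assert (HT2 : dl <= T) by apply Rmax_r.
  assert (UC : uniform_continuity f (fun c => dl <= c <= T + 1)).
  { apply Heine. apply compact_P3. intros x Hx.
    apply continuity_pt_filterlim.
    assert (C : @continuous R_UniformSpace R_UniformSpace f x).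
    { apply (@ex_derive_continuous R_AbsRing R_NormedModule). exists (df x). apply Hder. lra. }
    exact C. }
  assert (Hem : 0 < eps * m) by nra.
  destruct (UC (mkposreal _ Hem)) as [[del Hdel] Hu]. simpl in Hu.
  set (h := Rmin (del / 2) 1).
  assert (Hh : 0 < h) by (unfold h; apply Rmin_pos; lra).
  assert (Hh1 : h <= del / 2) by apply Rmin_l.
  assert (Hh2 : h <= 1) by apply Rmin_r.
  assert (Ind : forall k : nat, dl + INR k * h <= T + 1 ->
            exists g, Good (dl + INR k * h) g).
  { induction k as [|k IH]; intros Hk.
    - exists g1. simpl. rewrite Rmult_0_l, Rplus_0_r. exact G1.
    - rewrite S_INR in Hk.
      assert (Hk0 := pos_INR k).
      destruct IH as [g [PLg [Egc Eg]]]. nra.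
      set (c := dl + INR k * h) in *.
      set (c' := c + h).
      set (s := (f c' - f c) / h).
      set (g' := fun x => if Rle_dec x c then g x else g c + s * (x - c)).
      set (g'' := fun x => if Rle_dec x c' then g' x else g' c' + 0 * (x - c')).
      exists g''. rewrite S_INR. replace (dl + (INR k + 1) * h) with c' by (unfold c', c; ring).
      assert (Hcc : c < c') by (unfold c'; lra).
      assert (Hdc : dl <= c) by (unfold c; nra).
      assert (Hc'T : c' <= T + 1) by (unfold c', c; lra).
      assert (Hfc : f c <= f c') by (apply Hmono; lra).
      assert (Hsh : s * h = f c' - f c) by (unfold s; field; lra).
      assert (Hs : 0 <= s) by (unfold s; apply Rdiv_le_0_compat; lra).
      assert (Hunif : f c' - f c < eps * m).
      { assert (A := Hu c' c).
        assert (A' : Rabs (f c' - f c) < eps * m).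
        { apply A; try lra. rewrite Rabs_pos_eq; unfold c'; lra. }
        rewrite Rabs_pos_eq in A' by lra. exact A'. }
      split; [|split].
      + exact (L2 g' c c' 0 (L1 g c s PLg) Hcc).
      + unfold g'', g'. destruct (Rle_dec c' c'); [|lra].
        destruct (Rle_dec c' c); [lra|]. rewrite Egc.
        replace (c' - c) with h by (unfold c'; ring). lra.
      + intros t Ht. unfold g'', g'. destruct (Rle_dec t c') as [_|]; [|lra].
        destruct (Rle_dec t c). { apply Eg. lra. }
        rewrite Egc. apply div_helper.
        * assert (f dl <= f t) by (apply Hmono; lra). fold m in H. lra.
        * assert (f dl <= f t) by (apply Hmono; lra). fold m in H.
          assert (f c <= f t) by (apply Hmono; lra).
          assert (f t <= f c') by (apply Hmono; lra).
          assert (0 <= s * (t - c) <= s * h) by (split; [apply Rmult_le_pos | apply Rmult_le_compat_l]; unfold c' in *; lra).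
          assert (eps * m <= eps * f t) by (apply Rmult_le_compat_l; lra).
          apply Rabs_le. split; lra. }
  destruct (archimed ((T - dl) / h)) as [Ha1 Ha2].
  assert (Hup : (0 <= up ((T - dl) / h))%Z).
  { apply le_IZR. assert (0 <= (T - dl)/h) by (apply Rdiv_le_0_compat; lra). lra. }
  destruct (IZN _ Hup) as [k Hk].
  assert (Ek : INR k = IZR (up ((T - dl) / h))) by (rewrite Hk, INR_IZR_INZ; auto).
  rewrite <- Ek in Ha1, Ha2.
  assert (Hkh1 : T - dl < INR k * h).
  { replace (T - dl) with ((T - dl)/h * h) by (field; lra). nra. }
  assert (Hkh2 : INR k * h <= T - dl + h).
  { replace (T - dl) with ((T - dl)/h * h) by (field; lra). nra. }
  destruct (Ind k ltac:(lra)) as [g [PLg [Egc Eg]]].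
  set (c := dl + INR k * h) in *.
  assert (Hc : T < c) by (unfold c; lra).
  exists (fun x => if Rle_dec x c then g x else g c + 0 * (x - c)).
  split.
  - apply (PLlast_pl _ c). apply L1; auto.
  - intros t Ht. destruct (Rle_dec t c). { apply Eg. lra. }
    rewrite Egc. apply div_helper.
    + assert (f dl <= f t) by (apply Hmono; lra). fold m in H. lra.
    + assert (f dl <= f t) by (apply Hmono; lra). fold m in H.
      assert (f c <= f t) by (apply Hmono; lra).
      assert (f t0 <= f c) by (apply Hmono; lra).
      assert (f t <= L) by (apply HLu; exists t; split; auto; lra).
      assert (eps * m <= eps * f t) by (apply Rmult_le_compat_l; lra).
      apply Rabs_le. split; lra.
Qed.
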